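(* Fix $\vartheta_1\in(0,\pi/2)$. The function $\Phi$ is increasing on $[\vartheta_1,\pi/2]$, with $\Phi(\vartheta_1)=0$ and $\Phi(\pi/2)=\frac{\pi}{2}(1-\cos\vartheta_1)$.
   Context: For integers $k\ge0$ let $I_k=[\vartheta_1+k\pi,(k+1)\pi-\vartheta_1]$ (so $|\sin\eta|\ge\sin\vartheta_1$ on $I_k$). For $\eta\in I_k$ set $\gamma(\eta)=\sqrt{1-\sin^2\vartheta_1/\sin^2\eta}\in[0,1)$ and $$\Phi(\eta)=-\eta\,\gamma(\eta)+k\pi+\arccos\Big(\frac{\cos(\eta-k\pi)}{\cos\vartheta_1}\Big),\qquad \arccos\in[0,\pi].$$ *)

(* Defs.v *)
From Stdlib Require Import Reals.
Open Scope R_scope.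

Definition gam (th1 eta : R) : R :=
  sqrt (1 - (sin th1)^2 / (sin eta)^2).

Definition Phi (th1 : R) (k : nat) (eta : R) : R :=
  - eta * gam th1 eta + INR k * PI + acos (cos (eta - INR k * PI) / cos th1).

(* Main.v *)
From Stdlib Require Import Reals Lra.
From Coquelicot Require Import Coquelicot.
Require Import Defs.
Open Scope R_scope.
Lemma xcos_lt_sin x : 0 < x <= PI/2 -> x * cos x < sin x.
Proof.
  intros Hx.
  destruct (MVT_cor2 (fun t => sin t - t * cos t) (fun t => t * sin t) 0 x) as [c [Hc1 Hc2]].
  - lra.
  - intros c Hc. apply is_derive_Reals. auto_derive; [auto|]. ring.
  - assert (0 < sin c). { apply sin_gt_0; lra. }
    rewrite sin_0, cos_0 in Hc1.
    assert (0 < c * sin c * (x - 0)) by (apply Rmult_lt_0_compat; [apply Rmult_lt_0_compat|]; lra).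
    lra.
Qed.
Lemma der_gpart th1 eta : 0 < 1 - sin th1 ^2 / sin eta ^ 2 -> sin eta <> 0 ->
  is_derive (fun x => - x * gam th1 x) eta
   (- gam th1 eta - eta * (sin th1 ^2 * cos eta / (sin eta ^3 * gam th1 eta))).
Proof.
  intros H1 H2. unfold gam. auto_derive.
  - repeat split; auto.
  - replace (1 + - (sin th1 * (sin th1 * 1) * / (sin eta * (sin eta * 1)))) with (1 - sin th1 ^ 2 / sin eta ^ 2) by (field; auto).
    assert (0 < sqrt (1 - sin th1 ^ 2 / sin eta ^ 2)) by (apply sqrt_lt_R0; auto).
    field; split; auto; lra.
Qed.

Lemma der_acos th1 eta : 0 < cos th1 -> -1 < cos eta / cos th1 < 1 ->
  is_derive (fun x => acos (cos x / cos th1)) eta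
   ((-1 / sqrt (1 - (cos eta / cos th1)²)) * (- sin eta / cos th1)).
Proof.
  intros Hc Hu. apply is_derive_Reals.

  apply (derivable_pt_lim_comp (fun x => cos x / cos th1) acos).
  - apply is_derive_Reals. auto_derive; [lra|]. field. lra.
  - apply (derive_pt_eq_1 _ _ _ (derivable_pt_acos _ Hu)). apply derive_pt_acos.
Qed.
Lemma dcont f x l : derivable_pt_lim f x l -> continuity_pt f x.
Proof. intros H. apply derivable_continuous_pt. exists l. exact H. Qed.

Lemma cont_acos_part th1 : 0 < th1 < PI/2 ->
  continuity_pt (fun x => acos (cos x / cos th1)) th1.
Proof.
  intros Hth. assert (Hc : 0 < cos th1) by (apply cos_gt_0; lra).
  apply (continuity_pt_locally_ext (fun x => atan (sqrt (1 - (cos x / cos th1)²) / (cos x / cos th1))) _ (PI/2 - th1)).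
  - lra.
  - intros y Hy. unfold R_dist in Hy. apply Rabs_def2 in Hy.
    rewrite acos_atan; auto.
    apply Rdiv_lt_0_compat; auto. apply cos_gt_0; lra.
  - change (continuity_pt (comp atan (fun x => sqrt (1 - (cos x / cos th1)²) / (cos x / cos th1))) th1).
    apply continuity_pt_comp.
    + apply continuity_pt_div.
      * change (continuity_pt (comp sqrt (fun x => 1 - (cos x / cos th1)²)) th1).
        apply continuity_pt_comp.
        -- apply (dcont _ _ (2 * (cos th1 / cos th1) * sin th1 / cos th1)). apply is_derive_Reals.
           unfold Rsqr. auto_derive; [lra|]. field. lra.
        -- apply continuity_pt_sqrt. unfold Rsqr. replace (cos th1 / cos th1) with 1 by (field; lra). lra.
      * apply (dcont _ _ (- sin th1 / cos th1)). apply is_derive_Reals.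
        auto_derive; [lra|]. field. lra.
      * intros H. unfold Rdiv in H. apply Rmult_integral in H. destruct H as [H|H]; [lra|].
        apply Rinv_neq_0_compat in H; lra.
    + apply (dcont _ _ _ (derivable_pt_lim_atan _)).
Qed.

Lemma cont_g_part th1 : 0 < th1 < PI/2 ->
  continuity_pt (fun x => - x * gam th1 x) th1.
Proof.
  intros Hth. assert (Hs : 0 < sin th1) by (apply sin_gt_0; lra).
  apply continuity_pt_mult.
  - apply continuity_pt_opp, continuity_pt_id.
  - unfold gam. change (continuity_pt (comp sqrt (fun x => 1 - sin th1 ^ 2 / sin x ^ 2)) th1).
    apply continuity_pt_comp.
    + apply (dcont _ _ (2 * sin th1 ^ 2 * cos th1 / sin th1 ^ 3)). apply is_derive_Reals.
      auto_derive; [apply Rgt_not_eq; apply Rmult_lt_0_compat; lra|]. field. lra.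
    + apply continuity_pt_sqrt. replace (sin th1 ^ 2 / sin th1 ^ 2) with 1 by (field; lra). lra.
Qed.
Definition dE th1 eta :=
  (- gam th1 eta - eta * (sin th1 ^2 * cos eta / (sin eta ^3 * gam th1 eta))) +
  ((-1 / sqrt (1 - (cos eta / cos th1)²)) * (- sin eta / cos th1)).

Lemma facts th1 eta : 0 < th1 < PI/2 -> th1 < eta <= PI/2 ->
  0 < sin th1 /\ sin th1 < sin eta /\ 0 < cos th1 /\ 0 <= cos eta < cos th1.
Proof.
  intros H1 H2.
  split; [apply sin_gt_0; lra|].
  split; [apply sin_increasing_1; lra|].
  split; [apply cos_gt_0; lra|].
  split; [apply cos_ge_0; lra|]. apply cos_decreasing_1; lra.
Qed.

Lemma dE_pos th1 eta : 0 < th1 < PI/2 -> th1 < eta <= PI/2 -> 0 < dE th1 eta.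
Proof.
  intros H1 H2. destruct (facts th1 eta H1 H2) as (Hs & HsS & Hc & HC1 & HC2).
  set (s := sin th1) in *. set (S := sin eta) in *. set (c := cos th1) in *. set (C := cos eta) in *.
  assert (HSC : S^2 + C^2 = 1) by (pose proof (sin2_cos2 eta); unfold Rsqr in *; subst S C; lra).
  assert (Hsc : s^2 + c^2 = 1) by (pose proof (sin2_cos2 th1); unfold Rsqr in *; subst s c; lra).
  assert (Hga : 0 < 1 - s^2/S^2).
  { assert (s^2 < S^2) by nra. apply Rlt_Rminus. apply (Rmult_lt_reg_r (S^2)); [nra|].
    field_simplify; nra. }
  assert (Hra : 0 < 1 - (C/c)²).
  { assert (C^2 < c^2) by nra. apply Rlt_Rminus. unfold Rsqr.
    apply (Rmult_lt_reg_r (c^2)); [nra|]. field_simplify; nra. }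
  unfold dE, gam. fold s S c C.
  set (g := sqrt (1 - s^2/S^2)). set (r := sqrt (1 - (C/c)²)).
  assert (Hg : 0 < g) by (apply sqrt_lt_R0; auto).
  assert (Hr : 0 < r) by (apply sqrt_lt_R0; auto).
  assert (Hgg : g * g = 1 - s^2/S^2) by (apply sqrt_sqrt; lra).
  assert (Hrr : r * r = 1 - (C/c)²) by (apply sqrt_sqrt; lra).
  assert (Hcr : c * r = S * g).
  { apply Rsqr_inj; try nra. unfold Rsqr.
    replace (c * r * (c * r)) with (c*c*(r*r)) by ring.
    replace (S * g * (S * g)) with (S*S*(g*g)) by ring.
    rewrite Hgg, Hrr. unfold Rsqr. field_simplify; try lra; try nra. }
  assert (Hr' : r = S * g / c) by (field_simplify; [rewrite <- Hcr; field|]; lra).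
  rewrite Hr'.
  replace (- g - eta * (s ^ 2 * C / (S ^ 3 * g)) + -1 / (S * g / c) * (- S / c))
    with ((S^3 * (1 - g*g) - eta * s^2 * C) / (S^3 * g)) by (field; lra).
  rewrite Hgg.
  replace (S ^ 3 * (1 - (1 - s ^ 2 / S ^ 2)) - eta * s ^ 2 * C) with (s^2 * (S - eta * C))
    by (field; lra).
  assert (eta * C < S) by (apply xcos_lt_sin; lra).
  apply Rdiv_lt_0_compat; [|apply Rmult_lt_0_compat; [apply pow_lt|]]; try lra.
  apply Rmult_lt_0_compat; [apply pow_lt|]; lra.
Qed.

Definition F th1 x := - x * gam th1 x + acos (cos x / cos th1).

Lemma Phi_F th1 x : Phi th1 0 x = F th1 x.
Proof. unfold Phi, F. simpl INR. rewrite Rmult_0_l, Rplus_0_r, Rminus_0_r. reflexivity. Qed.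

Lemma derF th1 eta : 0 < th1 < PI/2 -> th1 < eta <= PI/2 ->
  derivable_pt_lim (F th1) eta (dE th1 eta).
Proof.
  intros H1 H2. destruct (facts th1 eta H1 H2) as (Hs & HsS & Hc & HC1 & HC2).
  change (derivable_pt_lim (plus_fct (fun x => - x * gam th1 x) (fun x => acos (cos x / cos th1))) eta (dE th1 eta)).
  apply derivable_pt_lim_plus; apply is_derive_Reals.
  - apply der_gpart; [|lra].
    assert (sin th1^2 < sin eta^2) by nra. apply Rlt_0_minus. apply (Rmult_lt_reg_r (sin eta^2)); [nra|].
    field_simplify; nra.
  - apply der_acos; auto. split.
    + apply (Rmult_lt_reg_r (cos th1)); [lra|]. field_simplify; lra.
    + apply (Rmult_lt_reg_r (cos th1)); [lra|]. field_simplify; lra.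
Qed.

Theorem lemma5p7 (th1 : R) (Hth1 : 0 < th1 < PI / 2) :
  (forall x y : R, th1 <= x -> x < y -> y <= PI / 2 -> Phi th1 0 x < Phi th1 0 y) /\
  Phi th1 0 th1 = 0 /\
  Phi th1 0 (PI / 2) = PI / 2 * (1 - cos th1).
Proof.
  assert (Hc : 0 < cos th1) by (apply cos_gt_0; lra).
  assert (Hs : 0 < sin th1) by (apply sin_gt_0; lra).
  split; [|split].
  - intros x y Hx Hxy Hy. rewrite !Phi_F.
    pose proof (MVT_gen (F th1) x y (fun t => if Rle_dec t th1 then 1 else dE th1 t)) as H.
    cbv zeta in H. rewrite Rmin_left, Rmax_right in H by lra.
    destruct H as [c [Hcc Heq]].
    + intros t Ht. destruct (Rle_dec t th1); [lra|]. apply is_derive_Reals, derF; lra.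
    + intros t Ht. destruct (Req_dec t th1) as [->|Hne].
      * unfold F. change (continuity_pt (plus_fct (fun x => - x * gam th1 x) (fun x => acos (cos x / cos th1))) th1).
        apply continuity_pt_plus; [apply cont_g_part | apply cont_acos_part]; auto.
      * apply (dcont _ _ _ (derF th1 t Hth1 ltac:(lra))).
    + assert (0 < (if Rle_dec c th1 then 1 else dE th1 c)).
      { destruct (Rle_dec c th1); [lra|]. apply dE_pos; lra. }
      assert (0 < (if Rle_dec c th1 then 1 else dE th1 c) * (y - x)) by (apply Rmult_lt_0_compat; lra).
      lra.
  - rewrite Phi_F. unfold F, gam.
    replace (1 - sin th1 ^ 2 / sin th1 ^ 2) with 0 by (field; lra).
    replace (cos th1 / cos th1) with 1 by (field; lra).
    rewrite sqrt_0, acos_1. ring.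
  - rewrite Phi_F. unfold F, gam. rewrite sin_PI2, cos_PI2.
    replace (1 - sin th1 ^ 2 / 1 ^ 2) with (cos th1 ^ 2) by (pose proof (sin2_cos2 th1); unfold Rsqr in *; field_simplify; lra).
    replace (0 / cos th1) with 0 by (field; lra).
    rewrite sqrt_pow2, acos_0 by lra. ring.
Qed.
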